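(* Let $H=(\mathcal{V},\mathcal{I})$ be an interval hypergraph and let $\mathcal{P}=\{S_1,\dots,S_k\}$ be a partition of $\mathcal{I}$ such that each $S_i$ has an exact hitting set $h_i$. Let $R=\bigcup_{i=1}^k h_i$ and define $t:\mathcal{I}\to\mathcal{V}$ by letting $t(I)$ be the unique element of $I\cap h_i$, where $S_i$ is the part containing $I$. Then the clique number of the co-occurrence graph $G_{R,t}$ is at most $k$.
   Context: An interval hypergraph has vertex set $[n]=\{1,\dots,n\}$ and hyperedges that are nonempty sets of consecutive integers. An exact hitting set of a family $S$ of hyperedges is a set $h\subseteq\mathcal{V}$ with $|h\cap I|=1$ for every $I\in S$. For a representative function $t$ (with $t(I)\in I$) and its image $R$, the co-occurrence graph $G_{R,t}$ has vertex set $R$, with distinct $u,v$ adjacent iff some $I\in\mathcal{I}$ has $u,v\in I$ and $t(I)\in\{u,v\}$. *)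

(* Defs.v *)
From mathcomp Require Import all_boot all_order.
Set Implicit Arguments. Unset Strict Implicit. Unset Printing Implicit Defensive.

(* Vertex set [n] = {1,...,n} is represented by 'I_n = {0,...,n-1} (shift by one). *)

Definition is_interval (n : nat) (I : {set 'I_n}) : Prop :=
  I != set0 /\
  forall x y z : 'I_n, x \in I -> z \in I -> (x <= y <= z)%N -> y \in I.

Definition exact_hitting_set (n : nat) (S : {set {set 'I_n}}) (h : {set 'I_n}) : Prop :=
  forall I, I \in S -> #|I :&: h| = 1%N.

Definition cooc_adj (n : nat) (E : {set {set 'I_n}}) (R : {set 'I_n})
  (t : {set 'I_n} -> 'I_n) (u v : 'I_n) : bool :=
  [&& u \in R, v \in R, u != v &
   [exists I in E, [&& u \in I, v \in I & (t I == u) || (t I == v)]]].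

Definition is_clique (n : nat) (E : {set {set 'I_n}}) (R : {set 'I_n})
  (t : {set 'I_n} -> 'I_n) (C : {set 'I_n}) : bool :=
  (C \subset R) &&
  [forall u in C, forall v in C, (u != v) ==> cooc_adj E R t u v].

Definition clique_number (n : nat) (E : {set {set 'I_n}}) (R : {set 'I_n})
  (t : {set 'I_n} -> 'I_n) : nat :=
  \max_(C : {set 'I_n} | is_clique E R t C) #|C|.

(* Main.v *)
Require Import Defs.
From mathcomp Require Import all_boot all_order.

Lemma ex_min_in (n : nat) (C : {set 'I_n}) {c : 'I_n} : c \in C ->
  exists2 u, u \in C & forall w, w \in C -> (u <= w)%N.
Proof.
move=> cC; case: (arg_minnP (fun i : 'I_n => nat_of_ord i) cC) => u uC H.
by exists u.
Qed.

Lemma ex_max_in (n : nat) (C : {set 'I_n}) {c : 'I_n} : c \in C ->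
  exists2 u, u \in C & forall w, w \in C -> (w <= u)%N.
Proof.
move=> cC; case: (arg_maxnP (fun i : 'I_n => nat_of_ord i) cC) => u uC H.
by exists u.
Qed.

Theorem lemma8 (n : nat) (E : {set {set 'I_n}})
  (P : {set {set {set 'I_n}}}) (h : {set {set 'I_n}} -> {set 'I_n})
  (t : {set 'I_n} -> 'I_n) :
  (forall I, I \in E -> is_interval I) ->
  partition P E ->
  (forall S, S \in P -> exact_hitting_set S (h S)) ->
  (forall S I, S \in P -> I \in S -> t I \in I :&: h S) ->
  (clique_number E (\bigcup_(S in P) h S) t <= #|P|)%N.
Proof.
move=> Hint Hpart Hex Ht.
set R := \bigcup_(S in P) h S.
have Hcov := cover_partition Hpart.
have key : forall m (C : {set 'I_n}), (#|C| <= m)%N -> is_clique E R t C ->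
   (#|C| <= #|[set S in P | C :&: h S != set0]|)%N.
  elim=> [|m IH] C.
    by rewrite leqn0 => /eqP ->.
  move=> Hm Hcl.
  have Hcl' := Hcl; move/andP: Hcl' => [CR /forallP Hadj].
  case: (ltnP 1 #|C|) => HC; last first.
    case: (posnP #|C|) => [->//|Cpos].
    have /card_gt0P [c cC] := Cpos.
    have : c \in R by apply: (subsetP CR).
    case/bigcupP => S SP cS.
    have -> : #|C| = 1%N by apply/eqP; rewrite eqn_leq HC Cpos.
    apply/card_gt0P; exists S; rewrite inE SP /=.
    by apply/set0Pn; exists c; rewrite inE cC cS.
  have /card_gt0P [c cC] : (0 < #|C|)%N by apply: ltnW.
  have [u uC umin] := ex_min_in _ _ cC.
  have [v vC vmax] := ex_max_in _ _ cC.
  have uv : u != v.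
    apply/eqP => euv.
    move: HC; rewrite ltnNge => /negP; apply.
    apply/card_le1_eqP => x y xC yC.
    apply/val_inj/eqP; rewrite eqn_leq.
    have := umin _ xC; have := vmax _ yC; have := umin _ yC; have := vmax _ xC.
    rewrite euv; move=> a b c' d; by rewrite (leq_trans a b) (leq_trans c' d).
  have := Hadj u; rewrite uC => /forallP /(_ v); rewrite vC uv /=.
  case/and4P => _ _ _ /existsP [I /and4P [IE uI vI tI]].
  have : I \in cover P by rewrite Hcov.
  case/bigcupP => S SP IS.
  have CI : C \subset I.
    apply/subsetP => w wC.
    case: (Hint I IE) => _ Hc; apply: (Hc u w v uI vI).
    by rewrite umin // vmax.
  have tIh := Ht S I SP IS.
  have tC : t I \in C by case/orP: tI => /eqP ->.
  have Hone := Hex S SP I IS.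
  have CS : C :&: h S = [set t I].
    apply/eqP; rewrite eq_sym eqEcard sub1set inE tC.
    move: tIh; rewrite inE => /andP [_ ->] /=.
    rewrite cards1 -Hone; apply: subset_leq_card; exact: setSI.
  set C' := C :\ t I.
  have cardC' : #|C| = #|C'|.+1 by rewrite /C' (cardsD1 (t I) C) tC.
  have HC' : (#|C'| <= m)%N by rewrite -ltnS -cardC'.
  have clC' : is_clique E R t C'.
    apply/andP; split.
      by apply: subset_trans CR; apply: subsetDl.
    apply/forallP => x; apply/implyP => xC; apply/forallP => y; apply/implyP => yC.
    have := Hadj x; rewrite (subsetP (subsetDl C [set t I]) _ xC) /=.
    by move/forallP/(_ y); rewrite (subsetP (subsetDl C [set t I]) _ yC).
  have := IH C' HC' clC'.
  move=> le'; rewrite cardC'; apply: (leq_ltn_trans le').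
  apply: (@leq_ltn_trans #|[set S0 in P | C :&: h S0 != set0] :\ S|).
    apply: subset_leq_card; apply/subsetP => S' ; rewrite !inE.
    case/andP => S'P /set0Pn [x]; rewrite !inE => /andP [/andP [xt xC] xh]; idtac.
    rewrite S'P /=; apply/andP; split.
      apply/eqP => eS; move: xt; rewrite eS in xh.
      have : x \in C :&: h S by rewrite inE xC xh.
      by rewrite CS inE => ->.
    by apply/set0Pn; exists x; rewrite inE xC xh.
  rewrite (cardsD1 S [set S0 in P | C :&: h S0 != set0]).
  have -> : S \in [set S0 in P | C :&: h S0 != set0].
    by rewrite inE SP CS /=; apply/set0Pn; exists (t I); rewrite inE.
  by [].
rewrite /clique_number; apply/bigmax_leqP => C HC.
apply: leq_trans (key _ C (leqnn _) HC) _.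
apply: subset_leq_card; apply/subsetP => S; rewrite inE => /andP [] //.
Qed.
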